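(* Let $1\le k\le n$, $c\in\mathrm{GRS}(\alpha,u,k)$, $e\in\mathbb{E}^n$ of Hamming weight $t\le\lfloor (n-k)/2\rfloor$, and $r=c+e$. Run the following procedure on $r$: D1–D2: set $A\leftarrow0$, $B\leftarrow\eta$, $C\leftarrow1$, $D\leftarrow -h_{r'}$. D3: if $\deg C+k-1\ge\deg D$, go to D6. D4: set $d\leftarrow\deg D-\deg B$ and $\gamma\leftarrow\mathrm{LC}(D)\mathrm{LC}(B)^{-1}$. D5: if $d\ge0$, set $C\leftarrow C-\gamma x^dA$, $D\leftarrow D-\gamma x^dB$; if $d<0$, simultaneously set $(A,B,C,D)\leftarrow(C,\ D,\ x^{-d}C-\gamma A,\ x^{-d}D-\gamma B)$ (using the old values on the right). Return to D3. D6: output $(u_1P(\alpha_1),\dots,u_nP(\alpha_n))$ where $P=-D/C$. Then the procedure terminates, at termination $C$ divides $D$ in $\mathbb{E}[x]$, $-D/C$ is the polynomial $h_{c'}$ of degree $<k$ with $c=(u_1h_{c'}(\alpha_1),\dots,u_nh_{c'}(\alpha_n))$, and the output equals $c$.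
   Context: $\mathbb{E}$ is a finite field, $\alpha_1,\dots,\alpha_n\in\mathbb{E}$ pairwise distinct, $u_1,\dots,u_n\in\mathbb{E}$ nonzero. $\mathrm{GRS}(\alpha,u,k)=\{(u_1f(\alpha_1),\dots,u_nf(\alpha_n)) : f\in\mathbb{E}[x],\ \deg f<k\}$. For $1\le i\le n$, $\tilde h_i=\prod_{j\ne i}(x-\alpha_j)$, $h_i=\tilde h_i(\alpha_i)^{-1}\tilde h_i$; $h_{r'}=\sum_{i=1}^n r_iu_i^{-1}h_i$ and $\eta=\prod_{i=1}^n(x-\alpha_i)$. $\deg$ is degree in $x$ with $\deg0=-\infty$; $\mathrm{LC}$ denotes leading coefficient. *)

(* Defs.v *)
From HB Require Import structures.
From mathcomp Require Import all_boot all_order all_algebra all_field.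
Set Implicit Arguments. Unset Strict Implicit. Unset Printing Implicit Defensive.
Import Order.TTheory GRing.Theory Num.Theory.
Local Open Scope ring_scope.

Section GRSDecoder.
Variables (E : fieldType) (n : nat) (alpha u : 'I_n -> E).

Definition inGRS (k : nat) (c : 'I_n -> E) : Prop :=
  exists f : {poly E}, (size f <= k)%N /\ forall i, c i = u i * f.[alpha i].

Definition hamming_wt (e : 'I_n -> E) : nat := #|[set i | e i != 0]|.

Definition htilde (i : 'I_n) : {poly E} :=
  \prod_(j < n | j != i) ('X - (alpha j)%:P).
Definition hbasis (i : 'I_n) : {poly E} := ((htilde i).[alpha i])^-1 *: htilde i.
Definition eta : {poly E} := \prod_(j < n) ('X - (alpha j)%:P).

Definition hvec (r : 'I_n -> E) : {poly E} :=
  \sum_(i < n) (r i * (u i)^-1) *: hbasis i.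

Definition dstate := ({poly E} * {poly E} * {poly E} * {poly E})%type.

Definition dinit (r : 'I_n -> E) : dstate := (0, eta, 1, - hvec r).

(* D3 test: deg C + k - 1 >= deg D, with deg 0 = -oo (and k >= 1) *)
Definition dstop (k : nat) (s : dstate) : bool :=
  let: (A, B, C, D) := s in
  (D == 0) || ((C != 0) && (size D < size C + k)%N).

Definition dstep (s : dstate) : dstate :=
  let: (A, B, C, D) := s in
  let d : int := (size D)%:Z - (size B)%:Z in
  let g := lead_coef D * (lead_coef B)^-1 in
  if (0 <= d)%R then
    (A, B, C - g *: ('X^(absz d) * A), D - g *: ('X^(absz d) * B))
  else
    (C, D, 'X^(absz d) * C - g *: A, 'X^(absz d) * D - g *: B).

Definition dC (s : dstate) : {poly E} := let: (_, _, C, _) := s in C.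
Definition dD (s : dstate) : {poly E} := let: (_, _, _, D) := s in D.

Definition doutput (s : dstate) : 'I_n -> E :=
  let P := - (dD s %/ dC s) in fun i => u i * P.[alpha i].

End GRSDecoder.

(* Main.v *)
Require Import Defs.
From HB Require Import structures.
From mathcomp Require Import all_boot all_order all_algebra all_field.
From mathcomp Require Import zify ring.
From Stdlib Require Import FunctionalExtensionality.
Import Order.TTheory GRing.Theory Num.Theory.
Set Implicit Arguments. Unset Strict Implicit.
Local Open Scope ring_scope.

Lemma size_sub_lead (E : fieldType) (p q : {poly E}) :
  p != 0 -> size p = size q -> lead_coef p = lead_coef q -> (size (p - q)%R < size p)%N.
Proof.
move=> p0 spq lpq.
have le : (size (p - q)%R <= size p)%N.
  by apply: leq_trans (size_polyD _ _) _; rewrite size_polyN -spq maxnn.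
rewrite ltn_neqAle le andbT; apply/eqP => eqs.
have : lead_coef (p - q) = 0.
  by rewrite lead_coefE eqs coefB {2}spq -!lead_coefE lpq subrr.
move/eqP; rewrite lead_coef_eq0 subr_eq0 => /eqP pq.
by move: eqs; rewrite pq subrr size_poly0 => /esym/eqP; rewrite size_poly_eq0 -pq (negPf p0).
Qed.

Definition Inv (E : fieldType) (N k : nat) (et h : {poly E}) (s : dstate E) : Prop :=
  let: (A, B, C, D) := s in
  [/\ et %| B + A * h, et %| D + C * h, B != 0, C != 0 &
      [/\ (size C + size B = N.+2)%N, (size A + size D <= N.+1)%N
    & (A == 0) || (size A + k <= size B)%N]].

Arguments Inv {E}.

Definition meas (E : fieldType) (s : dstate E) : nat :=
  let: (A, B, C, D) := s in (size B + size D)%N.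

Arguments meas {E}.

Lemma dstep_inv (E : fieldType) (N k : nat) (et h : {poly E}) (s : dstate E) :
  Inv N k et h s -> ~~ dstop k s -> Inv N k et h (dstep s) /\ (meas (dstep s) < meas s)%N.
Proof.
case: s => [[[A B] C] D] [d1 d2 B0 C0 [sCB sAD sA]].
rewrite /dstop negb_or C0 /= -leqNgt => /andP [D0 sD].
rewrite /dstep.
set g := lead_coef D * (lead_coef B)^-1.
have lB0 : lead_coef B != 0 by rewrite lead_coef_eq0.
have lD0 : lead_coef D != 0 by rewrite lead_coef_eq0.
have g0 : g != 0 by rewrite mulf_neq0 ?invr_eq0.
have gB : lead_coef (g *: B) = lead_coef D by rewrite lead_coefZ /g mulfVK.
case: ifP => hd.
- have hBD : (size B <= size D)%N by move: hd; rewrite subr_ge0 lez_nat.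
  have -> : absz ((size D)%:Z - (size B)%:Z) = (size D - size B)%N.
    by rewrite distnEl.
  set p := (size D - size B)%N.
  have sXB : size ('X^p * B) = size D by rewrite mulrC size_mulXn // /p subnK.
  have sXA : (size (g *: ('X^p * A))%R < size C)%N.
    apply: leq_ltn_trans (size_scale_leq _ _) _.
    have [->|A0] := eqVneq A 0; first by rewrite mulr0 size_poly0 lt0n size_poly_eq0.
    rewrite mulrC size_mulXn // /p.
    have : (size C = N.+2 - size B)%N by rewrite -sCB addnK.
    move=> ->; lia.
  have sC' : size (C - g *: ('X^p * A)) = size C.
    by rewrite size_polyDl // size_polyN.
  have sD' : (size (D - g *: ('X^p * B))%R < size D)%N.
    apply: size_sub_lead => //; first by rewrite size_scale.
    by rewrite lead_coefZ lead_coefM lead_coefXn mul1r /g mulfVK.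
  split; last by rewrite /meas ltn_add2l.
  split => //; last split => //.
  + have -> : D - g *: ('X^p * B) + (C - g *: ('X^p * A)) * h =
              (D + C * h) - (g *: 'X^p) * (B + A * h).
      by rewrite mulrBl mulrDr -!scalerAl -!mulrA opprD !addrA; congr (_ - _); rewrite addrAC.
    by apply: dvdp_sub => //; apply: dvdp_mull.
  + by rewrite -size_poly_eq0 sC' size_poly_eq0.
  + by rewrite sC'.
  + by apply: leq_trans sAD; rewrite leq_add2l ltnW.
- have hBD : (size D < size B)%N by move/negbT: hd; rewrite -ltNge subr_lt0 ltz_nat.
  have -> : absz ((size D)%:Z - (size B)%:Z) = (size B - size D)%N.
    by rewrite distnEr // ltnW.
  set p := (size B - size D)%N.
  have sXD : size ('X^p * D) = size B by rewrite mulrC size_mulXn // /p subnK // ltnW.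
  have sXC : size ('X^p * C)%R = (N.+2 - size D)%N.
    rewrite mulrC size_mulXn // /p; lia.
  have sA' : (size (g *: A)%R < size ('X^p * C)%R)%N.
    apply: leq_ltn_trans (size_scale_leq _ _) _; rewrite sXC; lia.
  have sC' : size ('X^p * C - g *: A)%R = (N.+2 - size D)%N.
    by rewrite size_polyDl ?size_polyN // sXC.
  have sD' : (size ('X^p * D - g *: B)%R < size B)%N.
    rewrite -[X in (_ < X)%N]sXD; apply: size_sub_lead.
    - by rewrite -size_poly_eq0 sXD size_poly_eq0.
    - by rewrite size_scale.
    by rewrite lead_coefZ lead_coefM lead_coefXn mul1r /g mulfVK.
  split; last by rewrite /meas /=; rewrite addnC ltn_add2r.
  split => //; last split.
  + have -> : 'X^p * D - g *: B + ('X^p * C - g *: A) * h =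
              'X^p * (D + C * h) - g *: (B + A * h).
      by rewrite mulrBl scalerDr mulrDr -scalerAl mulrA opprD !addrA; congr (_ - _); rewrite addrAC.
    by apply: dvdp_sub; [apply: dvdp_mull | rewrite dvdpZr].
  + by rewrite -size_poly_eq0 sC'; lia.
  + rewrite sC'; have : (0 < size D)%N by rewrite size_poly_gt0. lia.
  + rewrite -(leq_add2r (size B)) addnAC sCB; lia.
  + by rewrite sD orbT.
Qed.

Arguments dstep_inv {E N k et h s}.

Lemma exists_stop (E : fieldType) (N k : nat) (et h : {poly E}) :
  forall M (s : dstate E), (meas s <= M)%N -> Inv N k et h s ->
  exists j, dstop k (iter j (@dstep E) s).
Proof.
elim=> [|M IH] s hm hI.
  case hs: (dstop k s); first by exists 0%N.
  have [_ ] := dstep_inv hI (negbT hs); rewrite ltnNge.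
  by move: hm; rewrite leqn0 => /eqP ->.
case hs: (dstop k s); first by exists 0%N.
have [hI' hm'] := dstep_inv hI (negbT hs).
have [j hj] := IH (dstep s) (leq_trans hm' hm) hI'.
by exists j.+1; rewrite iterSr.
Qed.

Lemma size_comb (E : fieldType) (X Y f : {poly E}) (m : nat) :
  (size X <= m)%N -> (size Y + size f <= m.+1)%N -> (size (X + Y * f)%R <= m)%N.
Proof.
move=> h1 h2; apply: leq_trans (size_polyD _ _) _; rewrite geq_max h1 /=.
apply: leq_trans (size_mul_leq _ _) _; lia.
Qed.

Lemma vanish (E : fieldType) (et L q : {poly E}) :
  et %| L * q -> L != 0 -> (size (L * q)%R < size et)%N -> q = 0.
Proof.
move=> hd L0 hs; have [//|q0] := eqVneq q 0.
have := dvdp_leq (mulf_neq0 L0 q0) hd; rewrite leqNgt hs //.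
Qed.

Arguments vanish {E et L q}.

Lemma natlem1 (a b k : nat) : (b <= k)%N -> (0 < b)%N -> (a + k <= (a + b).-1)%N -> False.
Proof. lia. Qed.

Lemma natlem2 (c b f k t N : nat) : (c + b = N.+2)%N -> (t + k < b)%N -> (f <= k)%N -> (c + f <= (N - t).+1)%N.
Proof. lia. Qed.
Lemma natlem3 (d c b k t N : nat) : (c + b = N.+2)%N -> (t + k < b)%N -> (d < c + k)%N -> (d <= N - t)%N.
Proof. lia. Qed.
Lemma natlem4 (x t k N : nat) : (t + t + k <= N)%N -> (x <= N - t)%N -> ((t.+1 + x).-1 < N.+1)%N.
Proof. lia. Qed.

Lemma final_ok (E : fieldType) (N k t : nat) (et h f L : {poly E}) (s : dstate E) :
  size et = N.+1 -> Inv N k et h s -> dstop k s -> L != 0 -> size L = t.+1 ->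
  (t + t + k <= N)%N -> (size f <= k)%N -> et %| L * (h - f) ->
  dC s != 0 /\ dD s = - (dC s * f).
Proof.
case: s => [[[A B] C] D] set [d1 d2 B0 C0 [sCB sAD sA]] /= hstop L0 sL htk sf hL.
split => //.
have dv : forall X Y, et %| Y + X * h -> et %| L * (Y + X * f).
  move=> X Y hXY.
  have -> : L * (Y + X * f) = L * (Y + X * h) - X * (L * (h - f)) by ring.
  by apply: dvdp_sub; [apply: dvdp_mull | apply: dvdp_mull].
have sBb : (t + k < size B)%N.
  rewrite ltnNge; apply/negP => sBs.
  have sq : (size (B + A * f)%R <= size B)%N.
    case/orP: sA => [/eqP -> | sA]; first by rewrite mul0r addr0.
    by apply: size_comb => //; apply: leq_trans (leqW sA); rewrite leq_add2l.
  have hs : (size (L * (B + A * f))%R < size et)%N.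
    apply: leq_ltn_trans (size_mul_leq _ _) _; rewrite set sL; lia.
  have q0 := vanish (dv _ _ d1) L0 hs.
  have eB : B = - (A * f) by apply/eqP; rewrite -addr_eq0 q0.
  have A0 : A != 0 by apply: contraNneq B0 => A0; rewrite eB A0 mul0r oppr0.
  have f0 : f != 0 by apply: contraNneq B0 => f0; rewrite eB f0 mulr0 oppr0.
  move: sA; rewrite (negPf A0) /= eB size_polyN size_mul //.
  have : (0 < size f)%N by rewrite size_poly_gt0.
  move: sf; apply: natlem1.
have sq : (size (D + C * f)%R <= N - t)%N.
  apply: size_comb; last exact: natlem2 sCB sBb sf.
  case/orP: hstop => [/eqP -> | /andP [_ hD]]; first by rewrite size_poly0.
  exact: natlem3 sCB sBb hD.
have hs : (size (L * (D + C * f))%R < size et)%N.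
  apply: leq_ltn_trans (size_mul_leq _ _) _; rewrite set sL; exact: natlem4 htk sq.
have q0 := vanish (dv _ _ d2) L0 hs.
by apply/eqP; rewrite -addr_eq0 q0.
Qed.

Lemma sizeprod (E : fieldType) n (alpha : 'I_n -> E) (P : pred 'I_n) :
  size (\prod_(j < n | P j) ('X - (alpha j)%:P)) = #|P|.+1.
Proof.
rewrite -big_filter size_prod_XsubC size_filter cardE /enum_mem size_filter -enumT.
by rewrite enumT; congr (_.+1); apply: eq_count => x.
Qed.

Lemma size_eta (E : fieldType) n (alpha : 'I_n -> E) : size (Defs.eta alpha) = n.+1.
Proof.
have := sizeprod alpha predT; rewrite /Defs.eta => ->.
by rewrite cardT size_enum_ord.
Qed.

Lemma eta_neq0 (E : fieldType) n (alpha : 'I_n -> E) : Defs.eta alpha != 0.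
Proof. by rewrite -size_poly_eq0 size_eta. Qed.

Lemma eta_split (E : fieldType) n (alpha : 'I_n -> E) i :
  Defs.eta alpha = ('X - (alpha i)%:P) * htilde alpha i.
Proof. by rewrite /Defs.eta (bigD1 i) //=. Qed.

Lemma size_htilde (E : fieldType) n (alpha : 'I_n -> E) i :
  size (htilde alpha i) = n.
Proof.
have := size_eta alpha; rewrite (eta_split alpha i).
have h0 : htilde alpha i != 0.
  by apply: contraTneq (eta_neq0 alpha) => h0; rewrite (eta_split alpha i) h0 mulr0 eqxx.
rewrite size_mul ?polyXsubC_eq0 // size_XsubC /=.
by move=> H; apply: succn_inj; rewrite -H.
Qed.

Lemma htilde_at (E : fieldType) n (alpha : 'I_n -> E) i j :
  injective alpha -> (htilde alpha i).[alpha j] = 0 <-> j != i.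
Proof.
move=> inj; split.
  move=> h; apply/negP => /eqP ji; subst j; move: h; rewrite /htilde horner_prod.
  move/eqP/prodf_eq0 => [x xi].
  rewrite hornerXsubC subr_eq0 => /eqP /inj ix.
  by move: xi; rewrite ix eqxx.
move=> ji; by rewrite /htilde (bigD1 j) //= hornerM hornerXsubC subrr mul0r.
Qed.

Lemma hbasis_at (E : fieldType) n (alpha : 'I_n -> E) i j :
  injective alpha -> (hbasis alpha i).[alpha j] = (i == j)%:R.
Proof.
move=> inj; rewrite /hbasis hornerZ.
case: (eqVneq i j) => [<-|ij].
  rewrite mulVf //; apply/eqP => h; have := (htilde_at i i inj).1 h.
  by rewrite eqxx.
by rewrite (htilde_at i j inj).2 ?mulr0 // eq_sym.
Qed.

Lemma size_sum_le (E : fieldType) n (F : 'I_n -> {poly E}) m :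
  (forall i, (size (F i) <= m)%N) -> (size (\sum_(i < n) F i)%R <= m)%N.
Proof.
move=> hF; elim/big_ind: _ => //; first by rewrite size_poly0.
by move=> x y hx hy; apply: leq_trans (size_polyD _ _) _; rewrite geq_max hx hy.
Qed.

Lemma size_hvec (E : fieldType) n (alpha u : 'I_n -> E) r :
  (size (hvec alpha u r) <= n)%N.
Proof.
apply: size_sum_le => i; apply: leq_trans (size_scale_leq _ _) _.
apply: leq_trans (size_scale_leq _ _) _; by rewrite size_htilde.
Qed.

Lemma hvecD (E : fieldType) n (alpha u : 'I_n -> E) r1 r2 :
  hvec alpha u (fun i => r1 i + r2 i) = hvec alpha u r1 + hvec alpha u r2.
Proof.
rewrite /hvec -big_split /=; apply: eq_bigr => i _.
by rewrite mulrDl scalerDl.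
Qed.

Lemma interp (E : fieldType) n (alpha u : 'I_n -> E) (g : {poly E}) :
  injective alpha -> (forall i, u i != 0) -> (size g <= n)%N ->
  hvec alpha u (fun i => u i * g.[alpha i]) = g.
Proof.
move=> inj hu sg.
have -> : hvec alpha u (fun i => u i * g.[alpha i]) = \sum_(i < n) g.[alpha i] *: hbasis alpha i.
  by apply: eq_bigr => i _; rewrite mulrC mulrA mulVf // mul1r.
apply/eqP; rewrite -subr_eq0; apply/eqP.
apply: (@roots_geq_poly_eq0 _ _ [seq alpha j | j <- enum 'I_n]).
- apply/allP => x /mapP [j _ ->]; rewrite /root hornerD hornerN horner_sum.
  rewrite (bigD1 j) //= hornerZ hbasis_at // eqxx mulr1 big1 ?addr0 ?subrr //.
  by move=> i ij; rewrite hornerZ hbasis_at // (negPf ij) mulr0.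
- by rewrite map_inj_uniq ?enum_uniq.
- rewrite size_map size_enum_ord; apply: leq_trans (size_polyD _ _) _.
  rewrite size_polyN geq_max sg andbT; apply: size_sum_le => i.
  apply: leq_trans (size_scale_leq _ _) _; apply: leq_trans (size_scale_leq _ _) _.
  by rewrite size_htilde.
Qed.

Definition Lam (E : fieldType) n (alpha e : 'I_n -> E) : {poly E} :=
  \prod_(j < n | e j != 0) ('X - (alpha j)%:P).

Lemma size_Lam (E : fieldType) n (alpha e : 'I_n -> E) :
  size (Lam alpha e) = (hamming_wt e).+1.
Proof. by rewrite /Lam sizeprod /hamming_wt cardsE. Qed.

Lemma Lam_div (E : fieldType) n (alpha u e : 'I_n -> E) :
  Defs.eta alpha %| Lam alpha e * hvec alpha u e.
Proof.
rewrite /hvec mulr_sumr; apply: (big_ind (fun p => Defs.eta alpha %| p)); first exact: dvdp0.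
  by move=> x y; apply: dvdp_add.
move=> i _; case: (eqVneq (e i) 0) => [->|ei]; first by rewrite mul0r scale0r mulr0 dvdp0.
rewrite /hbasis -!scalerAr -!mul_polyC; apply: dvdp_mull; apply: dvdp_mull.
rewrite /Lam (bigD1 i) //= (eta_split alpha i) mulrAC; exact: dvdp_mulIl.
Qed.

Lemma inv_init (E : fieldType) n k (alpha u : 'I_n -> E) r :
  Inv n k (Defs.eta alpha) (hvec alpha u r) (dinit alpha u r).
Proof.
rewrite /dinit /Inv; split.
- by rewrite mul0r addr0 dvdpp.
- by rewrite mul1r addNr dvdp0.
- exact: eta_neq0.
- exact: oner_neq0.
split.
- by rewrite size_poly1 size_eta.
- by rewrite size_poly0 add0n size_polyN; apply: leq_trans (size_hvec _ _ _) _.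
- by rewrite eqxx.
Qed.

Lemma natlem5 (t n k : nat) : (t <= (n - k) %/ 2)%N -> (k <= n)%N -> (t + t + k <= n)%N.
Proof.
lia.
Qed.

Theorem mainTheorem6 (E : finFieldType) (n k : nat) (alpha u : 'I_n -> E)
  (Halpha : injective alpha) (Hu : forall i, u i != 0)
  (Hk1 : (1 <= k)%N) (Hkn : (k <= n)%N)
  (c e : 'I_n -> E) (Hc : inGRS alpha u k c)
  (He : (hamming_wt e <= (n - k) %/ 2)%N) :
  let r := fun i => c i + e i in
  exists m : nat,
    [/\ forall j, (j < m)%N -> ~~ dstop k (iter j (@dstep E) (dinit alpha u r)),
        dstop k (iter m (@dstep E) (dinit alpha u r))
      & let s := iter m (@dstep E) (dinit alpha u r) in
        [/\ dC s %| dD s,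
            - (dD s %/ dC s) = hvec alpha u c,
            (size (hvec alpha u c) <= k)%N,
            (forall i, c i = u i * (hvec alpha u c).[alpha i])
          & doutput alpha u s = c]].
Proof.
move=> r.
case: Hc => g [sg cg].
have cE : c = (fun i => u i * g.[alpha i]) by apply: functional_extensionality => i; exact: cg.
have fE : hvec alpha u c = g by rewrite cE interp // (leq_trans sg Hkn).
set s0 := dinit alpha u r.
have I0 : Inv n k (Defs.eta alpha) (hvec alpha u r) s0 by apply: inv_init.
have exP : exists j, dstop k (iter j (@dstep E) s0).
  exact: (exists_stop (leqnn _) I0).
case: (ex_minnP exP) => m Pm minm.
have Ij : forall j, (j <= m)%N -> Inv n k (Defs.eta alpha) (hvec alpha u r) (iter j (@dstep E) s0).
  elim=> [//|j IH] hj /=.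
  have hj' : (j <= m)%N by apply: ltnW.
  have ns : ~~ dstop k (iter j (@dstep E) s0).
    by apply/negP => /minm; rewrite leqNgt hj.
  exact: (dstep_inv (IH hj') ns).1.
have [] := @final_ok E n k (hamming_wt e) (Defs.eta alpha) (hvec alpha u r) g (Lam alpha e)
  (iter m (@dstep E) s0) (size_eta alpha) (Ij m (leqnn m)) Pm.
- by rewrite -size_poly_eq0 size_Lam.
- exact: size_Lam.
- exact: natlem5.
- exact: sg.
- rewrite /r hvecD fE addrAC subrr add0r; exact: Lam_div.
move=> C0 eD.
exists m; split => //.
  by move=> j hj; apply/negP => /minm; rewrite leqNgt hj.
have eq1 : - (dD (iter m (@dstep E) s0) %/ dC (iter m (@dstep E) s0)) = g.
  by rewrite eD -mulrN mulrC mulpK // opprK.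
rewrite fE; split => //.
- by rewrite eD -mulrN; apply: dvdp_mulIl.
rewrite /doutput; apply: functional_extensionality => i.
by rewrite eq1 cg.
Qed.
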